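(* Let $m,n\ge0$, $0\le k\le\min(m,n)$, and let $i,j$ be integers with $0\le i\le m$, $0\le j\le n$, $k\le i+j\le m+n-k$. Then $$C_{m,n,k}(i,j)=\frac{\binom{m+n-k}{m-i,\ n-j,\ i+j-k}\;c_{m,n,k}(i,j)}{\binom{m+n-k}{i,\ j,\ m+n-k-i-j}\;D(m,n,k)},\qquad D(m,n,k)=\binom{m+n-k+1}{k}\binom{m+n-2k}{m-k}.$$
   Context: Multinomial coefficients: $\binom{a+b+c}{a,\ b,\ c}=\frac{(a+b+c)!}{a!\,b!\,c!}$. Let $e,f,h$ be the standard basis of $\mathfrak{sl}(2,\mathbb{C})$. $V(n)$ is the irreducible representation of highest weight $n$ with fixed highest weight vector $\phi_n$; $\{f^i\phi_n\}_{0\le i\le n}$ is a basis, $f^{n+1}\phi_n=0$. $\mathfrak{sl}(2)$ acts on $V(m)\otimes V(n)$ by $X(v\otimes w)=Xv\otimes w+v\otimes Xw$. For $0\le k\le\min(m,n)$, $\phi_{m,n,k}=\sum_{l=0}^{k}(-1)^l\binom{m-l}{k-l}\binom{n-k+l}{l} f^l\phi_m\otimes f^{k-l}\phi_n$; it is a highest weight vector of weight $m+n-2k$ generating a copy of $V(m+n-2k)$ with basis $f^a\phi_{m,n,k}$, $0\le a\le m+n-2k$, and $V(m)\otimes V(n)$ is the direct sum of these copies. The coordinates $c_{m,n,k}(i,j)$ are defined by $f^{p-k}\phi_{m,n,k}=\sum_{i+j=p,\,0\le i\le m,\,0\le j\le n} c_{m,n,k}(i,j)\, f^i\phi_m\otimes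 f^j\phi_n$ for $k\le p\le m+n-k$. The Clebsch–Gordan coefficients $C_{m,n,k}(i,j)$ are defined by $f^i\phi_m\otimes f^j\phi_n=\sum_{k} C_{m,n,k}(i,j)\, f^{i+j-k}\phi_{m,n,k}$, sum over $0\le k\le\min(m,n)$ with $k\le i+j\le m+n-k$. *)

(* Defs.v *)
From HB Require Import structures.
From mathcomp Require Import all_boot all_order all_algebra.
Set Implicit Arguments. Unset Strict Implicit. Unset Printing Implicit Defensive.
Import Order.TTheory GRing.Theory Num.Theory.
Local Open Scope ring_scope.

(* Model of V(m) (x) V(n): the matrix v : 'M[R]_(m.+1, n.+1) stands for
   \sum_(i,j) v i j  f^i phi_m (x) f^j phi_n ; delta_mx i j is the basis
   vector f^i phi_m (x) f^j phi_n. *)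
Section Defs.
Variable R : fieldType.

(* action of f: f(f^i phi_m (x) f^j phi_n) = f^(i+1) phi_m (x) f^j phi_n
   + f^i phi_m (x) f^(j+1) phi_n, with f^(m+1) phi_m = 0. *)
Definition fop (m n : nat) (v : 'M[R]_(m.+1, n.+1)) : 'M[R]_(m.+1, n.+1) :=
  \matrix_(i, j) ((if (0 < i)%N then v (inord i.-1) j else 0)
                + (if (0 < j)%N then v i (inord j.-1) else 0)).

Definition fpow (m n a : nat) (v : 'M[R]_(m.+1, n.+1)) := iter a (@fop m n) v.

Definition phi (m n k : nat) : 'M[R]_(m.+1, n.+1) :=
  \matrix_(i, j) (if (i + j == k)%N
                  then (-1) ^+ i * ('C(m - i, k - i))%:R * ('C(n - k + i, i))%:R
                  else 0).

Definition cc (m n k : nat) (i : 'I_m.+1) (j : 'I_n.+1) : R :=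
  fpow (i + j - k) (phi m n k) i j.

End Defs.

Definition multinom (a b c : nat) : nat := (a + b + c)`! %/ (a`! * b`! * c`!).

Definition Dmnk (m n k : nat) : nat := 'C(m + n - k + 1, k) * 'C(m + n - 2 * k, m - k).

Definition Cformula (R : fieldType) (m n k : nat) (i : 'I_m.+1) (j : 'I_n.+1) : R :=
  ((multinom (m - i) (n - j) (i + j - k))%:R * cc R k i j)
  / ((multinom i j (m + n - k - i - j))%:R * (Dmnk m n k)%:R).

(* Main.v *)
Require Import Defs.
From HB Require Import structures.
From mathcomp Require Import all_boot all_order all_algebra.
From mathcomp Require Import ring zify.
Import GRing.Theory.
Set Implicit Arguments. Unset Strict Implicit. Unset Printing Implicit Defensive.

Module MW1.
Local Open Scope ring_scope.


Section D1.
Variable R : fieldType.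
Variable d : nat.
Implicit Types a c : 'I_d.+1.

Definition Sm : 'M[R]_d.+1 := \matrix_(a, c) ((a == c.+1 :> nat)%:R).
Definition Em : 'M[R]_d.+1 :=
  \matrix_(a, c) ((c == a.+1 :> nat)%:R * (a.+1 * (d - a))%:R).
Definition wv : 'rV[R]_d.+1 := \row_a ((a`! * a`! * 'C(d, a))%:R).
Definition Wm := diag_mx wv.
Definition hv : 'rV[R]_d.+1 := \row_a (d%:R - (a + a)%:R).
Definition Hm := diag_mx hv.

Lemma SmE n (v : 'M[R]_(d.+1, n)) a (b : 'I_n) :
  (Sm *m v) a b = if (0 < a)%N then v (inord a.-1) b else 0.
Proof.
rewrite mxE; case: a => [[|a] Ha] /=.
  by apply: big1 => c _; rewrite mxE /= mul0r.
rewrite (bigD1 (inord a)) //= mxE inordK ?eqxx ?mul1r; last by apply: ltnW.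
rewrite big1 ?addr0 // => c Hc; rewrite mxE eqSS.
have -> : (a == c) = false.
  by apply/negbTE; apply: contra Hc => /eqP ->; rewrite inord_val.
by rewrite mul0r.
Qed.

Lemma EmE n (v : 'M[R]_(d.+1, n)) a (b : 'I_n) :
  (Em *m v) a b = if (a < d)%N then (a.+1 * (d - a))%:R * v (inord a.+1) b else 0.
Proof.
rewrite mxE; case: ifP => Had.
  rewrite (bigD1 (inord a.+1)) //= mxE inordK ?eqxx ?mul1r //.
  rewrite big1 ?addr0 // => c Hc; rewrite mxE.
  have -> : (c == a.+1 :> nat) = false.
    by apply/negbTE; apply: contra Hc => /eqP <-; rewrite inord_val.
  by rewrite !mul0r.
apply: big1 => c _; rewrite mxE.
have -> : (c == a.+1 :> nat) = false.
  apply/negbTE/eqP => Hc; move: (ltn_ord c); rewrite Hc ltnS => H.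
  by rewrite H in Had.
by rewrite !mul0r.
Qed.

End D1.

End MW1.
Import MW1.

Module MW1b.
Local Open Scope ring_scope.

Section D1.
Variable R : fieldType.
Variable d : nat.

Lemma SW : (Sm R d)^T *m Wm R d = Wm R d *m Em R d.
Proof.
apply/matrixP => a c; rewrite mul_mx_diag mul_diag_mx !mxE.
case: (eqVneq (c : nat) a.+1) => [Hc|Hc] /=; last by rewrite !mul0r mulr0.
rewrite Hc !mul1r -!natrM; congr (_%:R).
have H := mul_bin_left d a; rewrite factS.
rewrite -Hc in H *.
have -> : (c * a`! * (c * a`!) * 'C(d, c) = a`! * a`! * c * (c * 'C(d, c)))%N by ring.
rewrite H; ring.
Qed.

Lemma ESH' : True. Proof. by []. Qed.
Lemma ESH : Em R d *m Sm R d - Sm R d *m Em R d = Hm R d.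
Proof.
apply/matrixP => a c.
have e1 := EmE (Sm R d) a c; have e2 := SmE (Em R d) a c.
rewrite !mxE in e1 e2; rewrite !mxE e1 e2 {e1 e2}.
case: (eqVneq a c) => [<-|Hac].
  rewrite mulr1n.
  case: a => [[|a] Ha] /=.
    case: ifP => H.
      by rewrite inordK // eqxx subn0 mul1n mulr1 subr0.
    have -> : d = 0%N by lia.
    by rewrite subr0.
  rewrite (@inordK d a); last by lia.
  rewrite eqxx mul1r.
  case: ifP => H.
    rewrite inordK // eqxx mulr1.
    have -> : d = (a.+1 + (d - a.+1))%N by lia.
    set e := (d - a.+1)%N.
    have -> : (a.+1 + e - a.+1 = e)%N by lia.
    have -> : (a.+1 + e - a = e.+1)%N by lia.
    rewrite !natrD !natrM !mulrSr; ring.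
  have -> : d = a.+1 by lia.
  have -> : (a.+1 - a = 1)%N by lia.
  rewrite muln1 sub0r natrD; ring.
rewrite mulr0n.
have Hac' : (a : nat) != c by [].
move: (ltn_ord a) => Ha.
case: ifP => H1.
  rewrite (@inordK d a.+1) // eqSS (negbTE Hac') mulr0.
  case: ifP => H2 //; last by rewrite subr0.
  rewrite (@inordK d a.-1); last by lia.
  rewrite prednK // eq_sym (negbTE Hac') mul0r subr0 //.
case: ifP => H2 //; last by rewrite subr0.
rewrite (@inordK d a.-1); last by lia.
by rewrite prednK // eq_sym (negbTE Hac') mul0r subr0.
Qed.
End D1.

End MW1b.
Import MW1b.

Module MW2.
Local Open Scope ring_scope.


Lemma ac6 (G : zmodType) (a h x y z k : G) :
  a + h + x + (y + (z + k)) = a + y + (x + z) + (h + k).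
Proof. by rewrite -!addrA; congr (_ + _); rewrite !(addrCA h) addrCA. Qed.

Section D2.
Variable R : fieldType.
Variables m n : nat.
Local Notation V := 'M[R]_(m.+1, n.+1).
Implicit Types u v : V.

Definition eop v : V := Em R m *m v + v *m (Em R n)^T.
Definition hop v : V := Hm R m *m v + v *m Hm R n.
Definition wf (d a : nat) : R := (a`! * a`! * 'C(d, a))%:R.
Definition bform u v : R :=
  \sum_(a < m.+1) \sum_(b < n.+1) u a b * v a b * (wf m a * wf n b).

Lemma fopE v : fop v = Sm R m *m v + v *m (Sm R n)^T.
Proof.
apply/matrixP => a b.
have -> : (Sm R m *m v + v *m (Sm R n)^T) a b =
   (Sm R m *m v) a b + (v *m (Sm R n)^T) a b by rewrite mxE.
have -> : (v *m (Sm R n)^T) a b = (Sm R n *m v^T) b a.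
  by rewrite -[v *m _]trmxK trmx_mul trmxK [in LHS]mxE.
rewrite SmE SmE /fop mxE.
by case: ifP => _; case: ifP => _; rewrite ?mxE.
Qed.

Lemma bformT u v : bform u v = \tr (u^T *m Wm R m *m v *m Wm R n).
Proof.
rewrite -mulmxA /mxtrace /bform.
under [RHS]eq_bigr => b _.
  rewrite mxE. under eq_bigr => a _ do
    rewrite /Wm !mul_mx_diag !mxE mulrACA.
  over.
by rewrite exchange_big.
Qed.

Lemma bformC u v : bform u v = bform v u.
Proof. by rewrite /bform; apply: eq_bigr => a _; apply: eq_bigr => b _; ring. Qed.

Lemma form_suml (I : finType) (P : pred I) (c : I -> R) (x : I -> V) y :
  bform (\sum_(t | P t) c t *: x t) y = \sum_(t | P t) c t * bform (x t) y.
Proof.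
rewrite /bform.
under eq_bigr => a _.
  under eq_bigr => b _.
    rewrite summxE big_distrl big_distrl /=.
    under eq_bigr => t _ do rewrite mxE -!mulrA [x t a b * _]mulrA.
    over.
  rewrite exchange_big.
  over.
rewrite exchange_big /=.
under [RHS]eq_bigr => t _.
  rewrite big_distrr.
  under eq_bigr => a _ do rewrite big_distrr.
  over.
by [].
Qed.

Lemma WtrT d : (Wm R d)^T = Wm R d.
Proof. by rewrite /Wm tr_diag_mx. Qed.

Lemma WS d : Wm R d *m Sm R d = (Em R d)^T *m Wm R d.
Proof. by rewrite -[LHS]trmxK trmx_mul WtrT SW trmx_mul WtrT. Qed.

Lemma fcontra u v : bform (fop u) v = bform u (eop v).
Proof.
rewrite !bformT fopE /eop linearD /= !trmx_mul trmxK.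
rewrite !mulmxDl !mulmxDr !mulmxDl mxtraceD mxtraceD.
congr (_ + _).
  have e : u^T *m (Sm R m)^T *m Wm R m = u^T *m Wm R m *m Em R m.
    by rewrite -mulmxA SW mulmxA.
  by rewrite e !mulmxA.
rewrite -!(mulmxA (Sm R n)) -!(mulmxA u^T) -(mulmxA (Wm R m)) mxtrace_mulC !mulmxA.
have e : u^T *m Wm R m *m v *m Wm R n *m Sm R n =
   u^T *m Wm R m *m v *m (Em R n)^T *m Wm R n.
  by rewrite -mulmxA WS mulmxA.
by rewrite e.
Qed.

Lemma fcomm v : eop (fop v) = fop (eop v) + hop v.
Proof.
rewrite !fopE /eop /hop.
have h0 d : Em R d *m Sm R d = Sm R d *m Em R d + Hm R d.
  by rewrite -(ESH R d) addrC subrK.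
have h1 := h0 m.
have h2 : (Sm R n)^T *m (Em R n)^T = (Em R n)^T *m (Sm R n)^T + Hm R n.
  by rewrite -!trmx_mul h0 linearD /= /Hm tr_diag_mx.
rewrite !mulmxDr !mulmxDl !mulmxA h1 -(mulmxA v (Sm R n)^T) h2.
rewrite mulmxDl mulmxDr !mulmxA.
exact: ac6.
Qed.

Definition homog (q : nat) (v : V) :=
  forall (a : 'I_m.+1) (b : 'I_n.+1), (a + b != q)%N -> v a b = 0.

Lemma fop_entry v (a : 'I_m.+1) (b : 'I_n.+1) :
  fop v a b = (if (0 < a)%N then v (inord a.-1) b else 0)
            + (if (0 < b)%N then v a (inord b.-1) else 0).
Proof. by rewrite /fop mxE. Qed.

Lemma eop_entry v (a : 'I_m.+1) (b : 'I_n.+1) :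
  eop v a b = (if (a < m)%N then (a.+1 * (m - a))%:R * v (inord a.+1) b else 0)
            + (if (b < n)%N then (b.+1 * (n - b))%:R * v a (inord b.+1) else 0).
Proof.
rewrite /eop.
have -> : (Em R m *m v + v *m (Em R n)^T) a b =
   (Em R m *m v) a b + (v *m (Em R n)^T) a b by rewrite mxE.
have -> : (v *m (Em R n)^T) a b = (Em R n *m v^T) b a.
  by rewrite -[v *m _]trmxK trmx_mul trmxK [in LHS]mxE.
by rewrite !EmE; case: ifP => _; case: ifP => _; rewrite ?mxE.
Qed.

Lemma homog_fop q v : homog q v -> homog q.+1 (fop v).
Proof.
move=> Hv a b Hab; rewrite fop_entry.
have Ha := ltn_ord a; have Hb := ltn_ord b.
case: ifP => H1; case: ifP => H2; rewrite ?addr0 //.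
- by rewrite !Hv ?addr0 //; rewrite inordK; lia.
- by rewrite !Hv ?addr0 //; rewrite inordK; lia.
- by rewrite !Hv ?addr0 //; rewrite inordK; lia.
Qed.

Lemma homog_phi k : homog k (phi R m n k).
Proof. by move=> a b Hab; rewrite /phi mxE (negbTE Hab). Qed.

Lemma homog_fpow k t : homog (k + t) (fpow t (phi R m n k)).
Proof.
elim: t => [|t IH]; first by rewrite addn0; apply: homog_phi.
by rewrite addnS /fpow iterS; apply: homog_fop.
Qed.

Lemma hop_homog q v : homog q v -> hop v = ((m + n)%:R - (q + q)%:R) *: v.
Proof.
move=> Hv; apply/matrixP => a b.
rewrite /hop /Hm.
have -> : (diag_mx (hv R m) *m v + v *m diag_mx (hv R n)) a b =
   (diag_mx (hv R m) *m v) a b + (v *m diag_mx (hv R n)) a b by rewrite mxE.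
rewrite mul_diag_mx mul_mx_diag !mxE.
case: (eqVneq (a + b)%N q) => [<-|H]; last by rewrite Hv // !mulr0 mul0r addr0.
rewrite !natrD; ring.
Qed.

Lemma fopZ c v : fop (c *: v) = c *: fop v.
Proof. by rewrite !fopE scalerDr -scalemxAr -scalemxAl. Qed.

Lemma eop_phi k : (k <= minn m n)%N -> eop (phi R m n k) = 0.
Proof.
move=> Hk; apply/matrixP => a b; rewrite eop_entry /phi !mxE.
have Ha := ltn_ord a; have Hb := ltn_ord b.
case: (eqVneq (a + b).+1 k) => [Hk'|Hk'].
  have Ham : (a < m)%N by lia.
  have Hbn : (b < n)%N by lia.
  rewrite Ham Hbn !inordK ?ltnS //.
  have -> : (a.+1 + b == k)%N = true by apply/eqP; lia.
  have -> : (a + b.+1 == k)%N = true by apply/eqP; lia.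
  set x := (m - a.+1)%N; set r := (n - k)%N.
  have e1 : (m - a = x.+1)%N by rewrite /x; lia.
  have e2 : (k - a.+1 = b)%N by lia.
  have e3 : (k - a = b.+1)%N by lia.
  have e4 : (n - b = (r + a).+1)%N by rewrite /r; lia.
  rewrite e1 e2 e3 e4 addnS.
  have h1 := mul_bin_diag x.+1 b.
  have h2 := mul_bin_diag (r + a).+1 a.
  simpl in h1, h2.
  have Hn : (a.+1 * x.+1 * 'C(x, b) * 'C((r + a).+1, a.+1) =
             b.+1 * (r + a).+1 * 'C(x.+1, b.+1) * 'C(r + a, a))%N.
    have -> : (a.+1 * x.+1 * 'C(x, b) * 'C((r + a).+1, a.+1) =
               (x.+1 * 'C(x, b)) * (a.+1 * 'C((r + a).+1, a.+1)))%N by ring.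
    rewrite h1 -h2; ring.
  rewrite exprS.
  set s := (-1) ^+ a.
  have -> : forall A B C D E F : nat,
      (A%:R * (-1 * s * B%:R * C%:R) + D%:R * (s * E%:R * F%:R) : R) =
      s * ((D * E * F)%:R - (A * B * C)%:R).
    by move=> *; rewrite !natrM; ring.
  by rewrite Hn subrr mulr0.
have H1 : (a < m)%N -> ((inord a.+1 : 'I_m.+1) + b == k)%N = false.
  by move=> H; rewrite inordK ?ltnS //; apply/negbTE.
have H2 : (b < n)%N -> (a + (inord b.+1 : 'I_n.+1) == k)%N = false.
  by move=> H; rewrite inordK ?ltnS // addnS; apply/negbTE.
case Ham: (a < m)%N; case Hbn: (b < n)%N.
- by rewrite H1 // H2 // !mulr0 addr0.
- by rewrite H1 // !mulr0 addr0.
- by rewrite H2 // !mulr0 addr0.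
- by rewrite addr0.
Qed.

End D2.

End MW2.
Import MW2.

Module MW3.
Local Open Scope ring_scope.


Section D3.
Variable R : fieldType.
Variables m n : nat.
Local Notation V := 'M[R]_(m.+1, n.+1).

Definition sc (k t : nat) : R :=
  t%:R * ((m + n)%:R - (k + k)%:R + 1 - t%:R).

Lemma fpowS t (v : V) : fpow t.+1 v = fop (fpow t v).
Proof. by rewrite /fpow iterS. Qed.

Lemma eop_fpow k t : (k <= minn m n)%N ->
  eop (fpow t (phi R m n k)) = sc k t *: fpow t.-1 (phi R m n k).
Proof.
move=> Hk; elim: t => [|t IH].
  by rewrite /fpow /= eop_phi // /sc mul0r scale0r.
rewrite fpowS fcomm IH fopZ (hop_homog (@homog_fpow _ _ _ k t)) /=.
have -> : sc k t *: fop (fpow t.-1 (phi R m n k)) = sc k t *: fpow t (phi R m n k).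
  by case: t {IH} => [|t]; rewrite ?fpowS // /sc mul0r !scale0r.
rewrite -scalerDl; congr (_ *: _).
rewrite /sc !natrD; ring.
Qed.

Lemma bform0r (u : V) : bform u 0 = 0.
Proof. by rewrite /bform big1 // => a _; rewrite big1 // => b _; rewrite mxE mulr0 mul0r. Qed.

Lemma formZr (u v : V) c : bform u (c *: v) = c * bform u v.
Proof.
rewrite /bform big_distrr; apply: eq_bigr => a _.
rewrite big_distrr; apply: eq_bigr => b _; rewrite mxE /=; ring.
Qed.

Lemma form_gt k k' a b : (k <= minn m n)%N -> (k' <= minn m n)%N -> (b < a)%N ->
  bform (fpow a (phi R m n k)) (fpow b (phi R m n k')) = 0.
Proof.
move=> Hk Hk'; elim: b a => [|b IH] [|a] // Hab.
  by rewrite fpowS fcontra /fpow /= eop_phi // bform0r.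
by rewrite (fpowS a) fcontra eop_fpow // formZr /= IH // mulr0.
Qed.

Lemma form_eq k a : (k <= minn m n)%N ->
  bform (fpow a (phi R m n k)) (fpow a (phi R m n k)) =
  (\prod_(t < a) sc k t.+1) * bform (phi R m n k) (phi R m n k).
Proof.
move=> Hk; elim: a => [|a IH]; first by rewrite big_ord0 mul1r.
by rewrite {1}fpowS fcontra eop_fpow // formZr /= IH big_ord_recr /= mulrCA mulrA.
Qed.

End D3.

End MW3.
Import MW3.

Module MW4.


Definition Lchu x y k := (\sum_(s < k.+1) 'C(x + s, s) * 'C(y + (k - s), k - s))%N.

Lemma chu x y k : Lchu x y k = 'C(x + y + k.+1, k).
Proof.
elim: y k => [|y IHy] k.
  elim: k => [|k IHk]; first by rewrite /Lchu big_ord_recr big_ord0 /= !bin0.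
  rewrite /Lchu big_ord_recr /= subnn add0n bin0 muln1.
  have -> : (\sum_(s < k.+1) 'C(x + s, s) * 'C(0 + (k.+1 - s), k.+1 - s) =
             \sum_(s < k.+1) 'C(x + s, s) * 'C(0 + (k - s), k - s))%N.
    by apply: eq_bigr => s _; rewrite !add0n !binn.
  rewrite -/(Lchu x 0 k) IHk.
  have -> : (x + 0 + k.+2 = (x + k.+1).+1)%N by lia.
  have -> : (x + 0 + k.+1 = x + k.+1)%N by lia.
  by rewrite binS addnC.
elim: k => [|k IHk]; first by rewrite /Lchu big_ord_recr big_ord0 /= !bin0.
have -> : Lchu x y.+1 k.+1 = (Lchu x y k.+1 + Lchu x y.+1 k)%N.
  rewrite /Lchu big_ord_recr /= subnn !addn0 bin0 muln1.
  rewrite [in RHS]big_ord_recr /= subnn !addn0 bin0 muln1.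
  rewrite addnAC; congr (_ + _).
  rewrite -big_split /=; apply: eq_bigr => s _.
  have Hs := ltn_ord s.
  have -> : (k.+1 - s = (k - s).+1)%N by lia.
  have -> : (y.+1 + (k - s).+1 = (y.+1 + (k - s)).+1)%N by lia.
  rewrite binS mulnDr; congr (_ + _).
  by have -> : (y.+1 + (k - s) = y + (k - s).+1)%N by lia.
rewrite IHk IHy.
have -> : (x + y.+1 + k.+2 = (x + y + k.+2).+1)%N by lia.
rewrite binS; congr (_ + _).
by have -> : (x + y.+1 + k.+1 = x + y + k.+2)%N by lia.
Qed.

Lemma alpha m k a : (a <= k)%N -> (k <= m)%N ->
  ('C(m - a, k - a) * ('C(m, a) * a`!) * (k - a)`! = 'C(m, k) * k`!)%N.
Proof.
move=> Hak Hkm; apply/eqP; rewrite -(eqn_pmul2r (fact_gt0 (m - k))); apply/eqP.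
have h1 := bin_fact (leq_sub2r a Hkm).
have e : (m - a - (k - a) = m - k)%N by lia.
rewrite e in h1.
have h2 := bin_fact (leq_trans Hak Hkm).
have h3 := bin_fact Hkm.
have -> : ('C(m - a, k - a) * ('C(m, a) * a`!) * (k - a)`! * (m - k)`! =
   ('C(m - a, k - a) * ((k - a)`! * (m - k)`!)) * ('C(m, a) * a`!))%N by ring.
rewrite h1.
have -> : ((m - a)`! * ('C(m, a) * a`!) = 'C(m, a) * (a`! * (m - a)`!))%N by ring.
by rewrite h2 -h3 mulnA.
Qed.

Lemma beta n k a : (a <= k)%N -> (k <= n)%N ->
  ('C(n - k + a, a) * a`! * ('C(n, k - a) * (k - a)`!) = 'C(n, k) * k`!)%N.
Proof.
move=> Hak Hkn; apply/eqP; rewrite -(eqn_pmul2r (fact_gt0 (n - k))); apply/eqP.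
have h1 := bin_fact (leq_addl (n - k) a).
have e : (n - k + a - a = n - k)%N by lia.
rewrite e in h1.
have h2 := bin_fact (leq_trans (leq_subr a k) Hkn).
have e2 : (n - (k - a) = n - k + a)%N by lia.
rewrite e2 in h2.
have h3 := bin_fact Hkn.
have -> : ('C(n - k + a, a) * a`! * ('C(n, k - a) * (k - a)`!) * (n - k)`! =
   ('C(n - k + a, a) * (a`! * (n - k)`!)) * ('C(n, k - a) * (k - a)`!))%N by ring.
rewrite h1.
have -> : ((n - k + a)`! * ('C(n, k - a) * (k - a)`!) =
           'C(n, k - a) * ((k - a)`! * (n - k + a)`!))%N by ring.
by rewrite h2 -h3 mulnA.
Qed.


Local Open Scope ring_scope.
Section D4.
Variable R : fieldType.
Variables m n : nat.

Lemma prod_sc k a : (k <= minn m n)%N -> (a <= m + n - (k + k))%N ->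
  \prod_(t < a) sc R m n k t.+1 = (a`! * 'C(m + n - (k + k), a) * a`!)%:R.
Proof.
move=> Hk; set M := (m + n - (k + k))%N.
elim: a => [|a IH] Ha; first by rewrite big_ord0 fact0 bin0.
rewrite big_ord_recr /= IH; last by lia.
have -> : sc R m n k a.+1 = (a.+1 * (M - a))%:R.
  rewrite /sc natrM (natrB _ (_ : a <= M)%N); last by lia.
  rewrite /M natrB; last by lia.
  rewrite !natrD; ring.
rewrite -natrM; congr (_%:R).
have h := mul_bin_left M a.
rewrite factS.
have -> : (a`! * 'C(M, a) * a`! * (a.+1 * (M - a)) =
    a`! * a`! * a.+1 * ((M - a) * 'C(M, a)))%N by ring.
rewrite -h; ring.
Qed.

Lemma sum_diag (F : 'I_m.+1 -> 'I_n.+1 -> R) k : (k <= minn m n)%N ->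
  \sum_(a < m.+1) \sum_(b < n.+1) (if (a + b == k)%N then F a b else 0) =
  \sum_(a < k.+1) F (inord a) (inord (k - a)).
Proof.
move=> Hk.
have inner : forall a : 'I_m.+1,
   \sum_(b < n.+1) (if (a + b == k)%N then F a b else 0) =
   if (a <= k)%N then F (inord a) (inord (k - a)) else 0.
  move=> a; case: ifP => Hak.
    rewrite (bigD1 (inord (k - a))) //= inordK; last by lia.
    have -> : (a + (k - a) == k)%N = true by apply/eqP; lia.
    rewrite inord_val big1 ?addr0 // => b Hb.
    have -> : (a + b == k)%N = false.
      apply/negbTE; apply: contra Hb => /eqP Hab.
      by apply/eqP/val_inj; rewrite /= inordK; lia.
    by [].
  apply: big1 => b _.
  by have -> : (a + b == k)%N = false by apply/negbTE/eqP; lia.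
under eq_bigr do rewrite inner.
rewrite (@big_ord_widen _ _ _ k.+1 m.+1 (fun a : nat => F (inord a) (inord (k - a)))); last by lia.
by rewrite [RHS]big_mkcond.
Qed.

Lemma phinorm k : (k <= minn m n)%N ->
  bform (phi R m n k) (phi R m n k) =
  (k`! * 'C(m, k) * (k`! * 'C(n, k)) * 'C(m + n - k + 1, k))%:R.
Proof.
move=> Hk; rewrite /bform.
under eq_bigr => a _.
  under eq_bigr => b _.
    rewrite /phi !mxE.
    have -> : forall (c : bool) (x : R), (if c then x else 0) * (if c then x else 0) *
       (wf R m a * wf R n b) = if c then x * x * (wf R m a * wf R n b) else 0.
      by move=> [] x //; rewrite !mul0r.
    over.
  over.
rewrite sum_diag //=.
have Hkm : (k <= m)%N by lia.
have Hkn : (k <= n)%N by lia.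
transitivity (\sum_(a < k.+1) ((k`! * 'C(m, k) * (k`! * 'C(n, k)))%:R *
                 ('C(n - k + a, a) * 'C(m - k + (k - a), k - a))%:R : R)).
  apply: eq_bigr => a _.
  have Ha := ltn_ord a.
  rewrite !inordK; try lia.
  have -> : (m - k + (k - a) = m - a)%N by lia.
  rewrite /wf.
  have s2 : (-1) ^+ a * (-1) ^+ a = 1 :> R.
    by rewrite -exprMn mulrNN mulr1 expr1n.
  set C1 := 'C(m - a, k - a); set C2 := 'C(n - k + a, a).
  have -> : (-1) ^+ a * C1%:R * C2%:R * ((-1) ^+ a * C1%:R * C2%:R) *
      ((a`! * a`! * 'C(m, a))%:R * ((k - a)`! * (k - a)`! * 'C(n, k - a))%:R) =
    ((-1) ^+ a * (-1) ^+ a) * (C2 * C1 * (C1 * ('C(m, a) * a`!) * (k - a)`!) *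
       (C2 * a`! * ('C(n, k - a) * (k - a)`!)))%:R :> R.
    by rewrite !natrM; ring.
  rewrite s2 mul1r alpha // beta // !natrM; ring.
rewrite -big_distrr /= -natr_sum.
have := chu (n - k) (m - k) k; rewrite /Lchu => ->.
rewrite -natrM; congr (_%:R); congr (_ * 'C(_, _))%N; lia.
Qed.

End D4.

End MW4.
Import MW4.

Module MW5.
Local Open Scope ring_scope.


Lemma multinom_fact a b c :
  (multinom a b c * (a`! * b`! * c`!) = (a + b + c)`!)%N.
Proof.
rewrite /multinom divnK //.
have h1 := bin_fact (leq_addr (b + c) a).
have h2 := bin_fact (leq_addr c b).
have e1 : (a + (b + c) - a = b + c)%N by lia.
have e2 : (b + c - b = c)%N by lia.
rewrite e1 in h1; rewrite e2 in h2.
rewrite -addnA -h1 -h2.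
apply/dvdnP; exists ('C(a + (b + c), a) * 'C(b + c, b))%N; ring.
Qed.

Section D5.
Variable R : fieldType.
Hypothesis HR : [pchar R] =i pred0.

Lemma natr_neq0 x : (0 < x)%N -> x%:R != 0 :> R.
Proof. by move=> Hx; rewrite (proj1 (pcharf0P R) HR) -lt0n. Qed.

Lemma fact_neq0 x : (x`!)%:R != 0 :> R.
Proof. exact: natr_neq0 (fact_gt0 x). Qed.

Lemma binR x y : (y <= x)%N -> 'C(x, y)%:R = (x`!)%:R / ((y`!)%:R * ((x - y)`!)%:R) :> R.
Proof.
move=> H; rewrite -(bin_fact H) !natrM mulfK //.
by rewrite mulf_neq0 // fact_neq0.
Qed.

Lemma multR a b c : (multinom a b c)%:R =
  ((a + b + c)`!)%:R / ((a`!)%:R * (b`!)%:R * (c`!)%:R) :> R.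
Proof.
rewrite -multinom_fact !natrM mulfK //.
by rewrite !mulf_neq0 // fact_neq0.
Qed.

Lemma key m n t i j (c : R) : (i <= m)%N -> (j <= n)%N -> (t <= minn m n)%N ->
  (t <= i + j)%N -> (i + j <= m + n - t)%N ->
  (multinom (m - i) (n - j) (i + j - t))%:R * c /
    ((multinom i j (m + n - t - i - j))%:R * (Dmnk m n t)%:R) *
  (((i + j - t)`! * 'C(m + n - (t + t), i + j - t) * (i + j - t)`!)%:R *
   (t`! * 'C(m, t) * (t`! * 'C(n, t)) * 'C(m + n - t + 1, t))%:R)
  = c * (wf R m i * wf R n j).
Proof.
move=> Him Hjn Ht Htp Hpt.
have Htm : (t <= m)%N by lia.
have Htn : (t <= n)%N by lia.
rewrite /Dmnk /wf !natrM !multR.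
rewrite (binR (_ : i + j - t <= m + n - (t + t))%N); last by lia.
rewrite (binR (_ : m - t <= m + n - 2 * t)%N); last by lia.
rewrite (binR Htm) (binR Htn) (binR Him) (binR Hjn).
have -> : (m - i + (n - j) + (i + j - t) = m + n - t)%N by lia.
have -> : (i + j + (m + n - t - i - j) = m + n - t)%N by lia.
have -> : (m + n - (t + t) - (i + j - t) = m + n - t - i - j)%N by lia.
have -> : (m + n - 2 * t - (m - t) = n - t)%N by lia.
have -> : (m + n - 2 * t = m + n - (t + t))%N by lia.
have Cb : 'C(m + n - t + 1, t)%:R != 0 :> R.
  by apply: natr_neq0; rewrite bin_gt0; lia.
set Cc := 'C(m + n - t + 1, t)%:R.
field.
by rewrite Cb !fact_neq0.
Qed.

End D5.

End MW5.
Import MW5.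

Module MW6.
Local Open Scope ring_scope.


Section D6.
Variable R : fieldType.
Hypothesis HR : [pchar R] =i pred0.
Variables m n : nat.
Variables (i : 'I_m.+1) (j : 'I_n.+1).
Local Notation V := 'M[R]_(m.+1, n.+1).
Local Notation p := (i + j)%N.

Definition G (k : nat) : V := fpow (p - k) (phi R m n k).
Definition cond (k : nat) := (k <= p <= m + n - k)%N.
Definition NN k := bform (G k) (G k).

Lemma formBl (u1 u2 v : V) : bform (u1 - u2) v = bform u1 v - bform u2 v.
Proof.
rewrite /bform -sumrB; apply: eq_bigr => a _.
rewrite -sumrB; apply: eq_bigr => b _; rewrite !mxE; ring.
Qed.

Lemma bform_delta (v : V) : bform (delta_mx i j) v = v i j * (wf R m i * wf R n j).
Proof.
rewrite /bform (bigD1 i) //= (bigD1 j) //= mxE !eqxx mul1r.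
rewrite big1 ?addr0; last first.
  by move=> b Hb; rewrite mxE eqxx (negbTE Hb) !mul0r.
rewrite big1 ?addr0 // => a Ha; apply: big1 => b _.
by rewrite mxE (negbTE Ha) !mul0r.
Qed.

Lemma orth k s : (k <= minn m n)%N -> (s <= minn m n)%N -> (k <= p)%N -> (s <= p)%N ->
  k != s -> bform (G k) (G s) = 0.
Proof.
move=> Hk Hs Hkp Hsp Hks; rewrite /G.
case: (ltngtP k s) => H.
- by apply: form_gt => //; lia.
- by rewrite bformC; apply: form_gt => //; lia.
- by rewrite H eqxx in Hks.
Qed.

Lemma cond_min k : (k <= minn m n)%N -> cond k -> (k <= p)%N.
Proof. by rewrite /cond => _ /andP[]. Qed.

Lemma NNval s : (s <= minn m n)%N -> cond s ->
  NN s = ((p - s)`! * 'C(m + n - (s + s), p - s) * (p - s)`!)%:R *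
         (s`! * 'C(m, s) * (s`! * 'C(n, s)) * 'C(m + n - s + 1, s))%:R.
Proof.
move=> Hs /andP[H1 H2]; rewrite /NN /G form_eq // prod_sc //; last by lia.
by rewrite phinorm.
Qed.

Lemma NN_neq0 s : (s <= minn m n)%N -> cond s -> NN s != 0.
Proof.
move=> Hs Hc; have [H1 H2] := andP Hc; rewrite NNval //.
rewrite mulf_neq0 // natr_neq0 //.
  by rewrite !muln_gt0 !fact_gt0 bin_gt0; lia.
by rewrite !muln_gt0 !fact_gt0 !bin_gt0; lia.
Qed.

Lemma keyCf s : (s <= minn m n)%N -> cond s ->
  Cformula R s i j * NN s = bform (delta_mx i j) (G s).
Proof.
move=> Hs Hc; have [H1 H2] := andP Hc.
rewrite NNval // bform_delta /Cformula.
have := ltn_ord i; have := ltn_ord j; move=> Hj Hi.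
apply: (key HR); lia.
Qed.

Lemma pairS (c : nat -> R) s : (s <= minn m n)%N -> cond s ->
  bform (\sum_(k < (minn m n).+1 | cond k) c k *: G k) (G s) = c s * NN s.
Proof.
move=> Hs Hc; rewrite form_suml (bigD1 (inord s)) /=; last by rewrite inordK.
rewrite inordK // big1 ?addr0 // => k /andP[Hk Hks].
have Hkm : (k <= minn m n)%N by rewrite -ltnS.
rewrite orth ?mulr0 //.
- exact: cond_min Hk.
- exact: cond_min Hc.
- by apply: contra Hks => /eqP Hks; apply/eqP/val_inj; rewrite /= inordK // ltnS.
Qed.

Definition Ks := [seq k <- iota 0 (minn m n).+1 | cond k].
Definition Xs : seq V := map G Ks.
Definition Ys : seq V :=
  [seq delta_mx (inord a) (inord (p - a)) | a <- iota (p - n) ((minn m p).+1 - (p - n))].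

Lemma Ks_prop t : (t < size Ks)%N -> (nth 0%N Ks t <= minn m n)%N && cond (nth 0%N Ks t).
Proof.
move=> Ht; have := mem_nth 0%N Ht; rewrite mem_filter mem_iota => /andP[-> /andP[_ H]].
by rewrite andbT -ltnS.
Qed.

Lemma XsE (t : nat) : (t < size Xs)%N -> Xs`_t = G (nth 0%N Ks t).
Proof. by rewrite size_map => Ht; rewrite (nth_map 0%N). Qed.

Lemma pairT (c : 'I_(size Xs) -> R) (s : 'I_(size Xs)) :
  bform (\sum_t c t *: Xs`_t) (Xs`_s) = c s * NN (nth 0%N Ks s).
Proof.
rewrite form_suml (bigD1 s) //= big1 ?addr0; first by rewrite XsE.
move=> t Hts; rewrite !XsE //.
have Hs : (s < size Ks)%N by rewrite -(size_map G).
have Ht : (t < size Ks)%N by rewrite -(size_map G).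
have /andP[H1 H2] := Ks_prop Hs; have /andP[H3 H4] := Ks_prop Ht.
rewrite orth ?mulr0 //; try exact: cond_min.
rewrite nth_uniq //; last by rewrite filter_uniq // iota_uniq.
Qed.

Lemma form0l (v : V) : bform 0 v = 0.
Proof. by rewrite bformC bform0r. Qed.

Lemma Xs_free : free Xs.
Proof.
have -> : free Xs = free (in_tuple Xs) by rewrite in_tupleE.
apply/freeP => c Hc s.
have := pairT c s; rewrite Hc form0l => /esym/eqP.
have Hs : (s < size Ks)%N by rewrite -(size_map G).
have /andP[H1 H2] := Ks_prop Hs.
by rewrite mulf_eq0 (negbTE (NN_neq0 H1 H2)) orbF => /eqP.
Qed.

Lemma homog_Ys v : homog p v -> v \in <<Ys>>%VS.
Proof.
move=> Hv; rewrite [v]matrix_sum_delta; apply: memv_suml => a _.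
apply: memv_suml => b _.
case: (eqVneq (a + b)%N p) => H; last by rewrite Hv // scale0r mem0v.
apply: memvZ; apply: memv_span; apply/mapP; exists (val a).
  have := ltn_ord a; have := ltn_ord b => Hb Ha.
  rewrite mem_iota /=; apply/andP; split; lia.
have := ltn_ord a; have := ltn_ord b => Hb Ha.
by congr delta_mx; apply/val_inj; rewrite /= inordK //; lia.
Qed.

Lemma Xs_sub : (<<Xs>> <= <<Ys>>)%VS.
Proof.
apply/span_subvP => x /mapP[k Hk ->]; apply: homog_Ys.
move: Hk; rewrite mem_filter => /andP[/andP[H1 H2] _].
have := @homog_fpow R m n k (p - k); by rewrite subnKC.
Qed.

Lemma sizeYX : (size Ys <= size Xs)%N.
Proof.
rewrite size_map size_iota size_map size_filter.
set d := minn (minn m n) (minn p (m + n - p)).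
have := ltn_ord i; have := ltn_ord j => Hj Hi.
have Hd : ((minn m n).+1 = d.+1 + (minn m n - d))%N by rewrite /d; lia.
rewrite Hd iotaD count_cat.
have -> : count cond (iota 0 d.+1) = d.+1.
  rewrite (@eq_in_count _ _ predT) ?count_predT ?size_iota //.
  move=> x; rewrite mem_iota /cond => Hx /=; apply/andP; split; rewrite /d in Hx; lia.
rewrite /d; lia.
Qed.

Lemma delta_in : delta_mx i j \in <<Xs>>%VS.
Proof.
have Heq : (<<Xs>> == <<Ys>>)%VS.
  rewrite eqEdim Xs_sub /= (eqP Xs_free).
  exact: leq_trans (dim_span Ys) sizeYX.
rewrite (eqP Heq); apply: homog_Ys => a b Hab.
rewrite mxE; case: (eqVneq a i) => [Ha|Ha]; case: (eqVneq b j) => [Hb|Hb] //.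
by rewrite Ha Hb eqxx in Hab.
Qed.

End D6.

End MW6.
Import MW6.

Unset Implicit Arguments.
Local Open Scope ring_scope.

Theorem corollary8p5 (R : fieldType) (HR : [pchar R] =i pred0)
    (m n : nat) (i : 'I_m.+1) (j : 'I_n.+1) :
  (delta_mx i j = \sum_(k < (minn m n).+1 | (k <= i + j <= m + n - k)%N)
                    Cformula R k i j *: fpow (i + j - k) (phi R m n k))
  /\
  (forall C : nat -> R,
     delta_mx i j = \sum_(k < (minn m n).+1 | (k <= i + j <= m + n - k)%N)
                      C k *: fpow (i + j - k) (phi R m n k) ->
     forall k : nat, (k <= minn m n)%N -> (k <= i + j <= m + n - k)%N ->
       C k = Cformula R k i j).
Proof.
split.
  set S := \sum_(k < _ | _) _.
  have HS : S = \sum_(k < (minn m n).+1 | cond i j k) Cformula R k i j *: G R i j k by [].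
  set u := delta_mx i j - S.
  have Hu : u \in <<Xs R i j>>%VS.
    apply: memvB; first exact: (delta_in HR).
    rewrite HS; apply: memv_suml => k Hk; apply: memvZ; apply: memv_span.
    apply: map_f; rewrite mem_filter Hk mem_iota /=; exact: ltn_ord.
  have Hc := @coord_span _ _ _ (in_tuple (Xs R i j)) u Hu.
  have H0 : forall s, coord (in_tuple (Xs R i j)) s u = 0.
    move=> s.
    have Hs : (s < size (Ks i j))%N by rewrite -(size_map (G R i j)).
    have /andP[H1 H2] := Ks_prop Hs.
    have := pairT (fun t => coord (in_tuple (Xs R i j)) t u) s.
    rewrite -Hc XsE // /u formBl HS (pairS (fun k => Cformula R k i j) H1 H2) -(keyCf HR H1 H2) subrr => /esym/eqP.
    by rewrite mulf_eq0 (negbTE (NN_neq0 HR H1 H2)) orbF => /eqP.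
  have : u = 0.
    by rewrite Hc; apply: big1 => s _; rewrite H0 scale0r.
  by move/eqP; rewrite subr_eq0 => /eqP.
move=> C HC k Hk Hc.
have := pairS C Hk Hc; rewrite -HC -(keyCf HR) //.
move/eqP; rewrite (inj_eq (mulIf (NN_neq0 HR Hk Hc))) => /eqP.
by [].
Qed.
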